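(* Fix $n\in\mathbb N$ and let $a$ be a configuration reachable in PSSPM from $(\underline{n})$. Then for every word $\omega\in\{\mathcal L,\mathcal R\}^*$, $$\omega(\mathcal R(a))\ \overset{*}{\triangleleft}\ \omega(\mathcal L(a)).$$
   Context: A configuration is a sequence $(c_i)_{i\in\mathbb Z}$ of nonnegative integers with only finitely many positive values; $(\underline{n})$ denotes the configuration with $c_0=n$ and $c_i=0$ otherwise. Rule $\mathcal L$ at column $i$ is applicable if $c_{i-1}+2\le c_i$ and moves one grain from column $i$ to column $i-1$; rule $\mathcal R$ at column $i$ is applicable if $c_i\ge c_{i+1}+2$ and moves one grain from column $i$ to column $i+1$. A PSSPM transition applies rules simultaneously on every column where some rule is applicable, at most one rule per column; in a configuration reachable from $(\underline{n})$ there is at most one column on which both rules are applicable (a ''choice''). For a configuration $a$ reachable in PSSPM from $(\underline{n})$: $\mathcal L(a)$ is the configuration obtained by the PSSPM transition from $a$ in which rule $\mathcal L$ is chosen on the choice column if there is one (if there is no choice, the unique transition); if no rule is applicable in $a$, $\mathcal L(a)=a$. $\mathcal R(a)$ is defined symmetrically, choosing $\mathcal R$. For a word $\omega=\omega_1\cdots\omega_k$ over $\{\mathcal L,\mathcal R\}$, $\omega(a)=\omega_2\cdots\omega_k(\omega_1(a))$ (the empty word acts as identity). For configurations $a,b$, let $\Delta(a,b)$ be the sequence $\Delta_i(a,b)=a_i-b_i$. Write $a\overset{*}{\triangleleft} b$ iff every entry of $\Delta(a,b)$ lies in $\{-1,0,1\}$ and the nonzero entries, read in increasing index order, form a word in $((-1)\,1)^*$,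 i.e. alternate $-1,1,-1,1,\dots$, starting with $-1$ and ending with $1$ (in particular $a=b$ implies $a\overset{*}{\triangleleft} b$); equivalently $\Delta(a,b)\in(0^*(-1)0^*10^* )^*$ with zeros elsewhere. *)

(* Defs.v *)
From Stdlib Require Import ZArith List Bool.
Import ListNotations.
Open Scope Z_scope.

(* A configuration: column i |-> number of grains c_i.  Finite support is
   automatic for the configurations considered (those reachable from (n)). *)
Definition config := Z -> nat.

Definition init (n : nat) : config := fun i => if Z.eqb i 0 then n else 0%nat.

Definition appL (c : config) (i : Z) : bool := Nat.leb (c (i - 1)%Z + 2)%nat (c i).
Definition appR (c : config) (i : Z) : bool := Nat.leb (c (i + 1)%Z + 2)%nat (c i).

Inductive rule := RL | RR.

Definition is_L (o : option rule) : bool :=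
  match o with Some RL => true | _ => false end.
Definition is_R (o : option rule) : bool :=
  match o with Some RR => true | _ => false end.

Definition fire (c : config) (ch : Z -> option rule) : config :=
  fun i => (c i - (if ch i then 1 else 0)
            + (if is_L (ch (i + 1)%Z) then 1 else 0)
            + (if is_R (ch (i - 1)%Z) then 1 else 0))%nat.

Definition valid_choice (c : config) (ch : Z -> option rule) : Prop :=
  forall i, match ch i with
            | None => appL c i = false /\ appR c i = false
            | Some RL => appL c i = true
            | Some RR => appR c i = true
            end.

Definition psspm_step (c d : config) : Prop :=
  exists ch, valid_choice c ch /\ forall i, d i = fire c ch i.

Inductive reachable (n : nat) : config -> Prop :=
| reach_init : forall c, (forall i, c i = init n i) -> reachable n c
| reach_step : forall c d, reachable n c -> psspm_step c d -> reachable n d.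

(* L(a): the PSSPM transition choosing L on the choice column(s);
   R(a): choosing R.  If no rule is applicable, fire leaves c unchanged. *)
Definition choiceL (c : config) (i : Z) : option rule :=
  if appL c i then Some RL else if appR c i then Some RR else None.
Definition choiceR (c : config) (i : Z) : option rule :=
  if appR c i then Some RR else if appL c i then Some RL else None.

Definition stepL (c : config) : config := fire c (choiceL c).
Definition stepR (c : config) : config := fire c (choiceR c).

Definition step_of (r : rule) (c : config) : config :=
  match r with RL => stepL c | RR => stepR c end.

Definition act (w : list rule) (c : config) : config :=
  fold_left (fun c r => step_of r c) w c.

Definition delta (a b : config) (i : Z) : Z := Z.of_nat (a i) - Z.of_nat (b i).

Fixpoint alt (s : list Z) : bool :=
  match s with
  | [] => true
  | x :: y :: t => Z.eqb x (-1) && Z.eqb y 1 && alt t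
  | _ => false
  end.

Definition window (N : nat) : list Z :=
  map (fun k => Z.of_nat k - Z.of_nat N) (seq 0 (2 * N + 1)).

Definition tri_star (a b : config) : Prop :=
  exists N : nat,
    (forall i, Z.of_nat N < Z.abs i -> delta a b i = 0) /\
    (forall i, -1 <= delta a b i <= 1) /\
    alt (filter (fun x => negb (Z.eqb x 0)) (map (delta a b) (window N))) = true.

(* Main.v *)
Require Import Defs.
From Stdlib Require Import ZArith List Lia Bool.
Import ListNotations.
Open Scope Z_scope.

Definition chf (r : rule) (x : config) : Z -> option rule :=
  match r with RL => choiceL x | RR => choiceR x end.

Lemma step_of_fire r x : step_of r x = fire x (chf r x).
Proof. destruct r; reflexivity. Qed.

Definition X (x : config) (i : Z) : Z := Z.of_nat (x i).
Definition rr (r : rule) (x : config) (i : Z) : Z := if is_R (chf r x i) then 1 else 0.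
Definition ll (r : rule) (x : config) (i : Z) : Z := if is_L (chf r x i) then 1 else 0.

Lemma appL_t x i : appL x i = true -> X x (i-1) + 2 <= X x i.
Proof. unfold appL, X. rewrite Nat.leb_le. lia. Qed.
Lemma appL_f x i : appL x i = false -> X x (i-1) + 2 > X x i.
Proof. unfold appL, X. rewrite Nat.leb_gt. lia. Qed.
Lemma appR_t x i : appR x i = true -> X x (i+1) + 2 <= X x i.
Proof. unfold appR, X. rewrite Nat.leb_le. lia. Qed.
Lemma appR_f x i : appR x i = false -> X x (i+1) + 2 > X x i.
Proof. unfold appR, X. rewrite Nat.leb_gt. lia. Qed.

Definition Facts (r : rule) (x : config) (jm j jp : Z) : Prop :=
  0 <= rr r x j <= 1 /\ 0 <= ll r x j <= 1 /\ rr r x j + ll r x j <= 1 /\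
  (rr r x j = 1 -> X x jp + 2 <= X x j) /\
  (ll r x j = 1 -> X x jm + 2 <= X x j) /\
  (X x jm + 2 <= X x j \/ X x jp + 2 <= X x j -> rr r x j + ll r x j = 1) /\
  match r with
  | RL => (X x jm + 2 <= X x j -> ll r x j = 1)
  | RR => (X x jp + 2 <= X x j -> rr r x j = 1)
  end.

Lemma facts r x jm j jp : jm = j - 1 -> jp = j + 1 -> Facts r x jm j jp.
Proof.
  intros -> ->. unfold Facts, rr, ll, chf.
  destruct r; [unfold choiceL|unfold choiceR];
  destruct (appL x j) eqn:E1; destruct (appR x j) eqn:E2;
  try apply appL_t in E1; try apply appL_f in E1;
  try apply appR_t in E2; try apply appR_f in E2; simpl; lia.
Qed.

Lemma chf_some r x i : chf r x i <> None -> (2 <= x i)%nat.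
Proof.
  unfold chf. destruct r; [unfold choiceL|unfold choiceR];
  destruct (appL x i) eqn:E1; destruct (appR x i) eqn:E2; try congruence;
  intros _; unfold appL, appR in *; rewrite ?Nat.leb_le in *; lia.
Qed.

Lemma fire_Z r x jm j jp : jm = j - 1 -> jp = j + 1 ->
  X (step_of r x) j = X x j + rr r x jm - ll r x j - rr r x j + ll r x jp.
Proof.
  intros -> ->. rewrite step_of_fire. unfold X, fire, rr, ll.
  pose proof (chf_some r x j) as H.
  destruct (chf r x j) as [[|]|]; simpl;
  destruct (is_L (chf r x (j+1))); destruct (is_R (chf r x (j-1)));
  try (assert (2 <= x j)%nat by (apply H; congruence)); lia.
Qed.

Definition Cases (r : rule) (x : config) (jm j jp : Z) : Prop :=
  (rr r x j = 0 /\ ll r x j = 0 /\ X x jm + 2 > X x j /\ X x jp + 2 > X x j) \/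
  (rr r x j = 1 /\ ll r x j = 0 /\ X x jp + 2 <= X x j /\
     match r with RL => X x jm + 2 > X x j | RR => True end) \/
  (rr r x j = 0 /\ ll r x j = 1 /\ X x jm + 2 <= X x j /\
     match r with RL => True | RR => X x jp + 2 > X x j end).

Lemma cases r x jm j jp : jm = j - 1 -> jp = j + 1 -> Cases r x jm j jp.
Proof.
  intros -> ->. unfold Cases, rr, ll, chf.
  destruct r; [unfold choiceL|unfold choiceR];
  destruct (appL x j) eqn:E1; destruct (appR x j) eqn:E2;
  try apply appL_t in E1; try apply appL_f in E1;
  try apply appR_t in E2; try apply appR_f in E2; simpl; lia.
Qed.

Lemma bnd r x j : 0 <= rr r x j <= 1 /\ 0 <= ll r x j <= 1 /\ rr r x j + ll r x j <= 1.
Proof. pose proof (facts r x (j-1) j (j+1) eq_refl eq_refl) as H. unfold Facts in H. tauto. Qed.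

Ltac dcases H := destruct H as [[? [? [? ?]]]|[[? [? [? ?]]]|[? [? [? ?]]]]].

Lemma SC1 r x pm2 pm p pp pp2 : pm = p - 1 -> pp = p + 1 -> pm2 = pm - 1 -> pp2 = pp + 1 ->
  ~ (X x pm + 2 <= X x p /\ X x pp + 2 <= X x p) ->
  X (step_of r x) pm + 2 <= X (step_of r x) p ->
  X (step_of r x) pp + 2 <= X (step_of r x) p ->
  X (step_of r x) pm + 2 = X (step_of r x) p /\ X (step_of r x) pp + 2 = X (step_of r x) p.
Proof.
  intros Hm Hp Hm2 Hp2 Hn.
  rewrite (fire_Z r x pm2 pm p Hm2 ltac:(lia)).
  rewrite (fire_Z r x pm p pp Hm Hp).
  rewrite (fire_Z r x p pp pp2 ltac:(lia) Hp2).
  pose proof (bnd r x pm2). pose proof (bnd r x pp2).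
  pose proof (cases r x pm2 pm p Hm2 ltac:(lia)) as C1.
  pose proof (cases r x pm p pp Hm Hp) as C2.
  pose proof (cases r x p pp pp2 ltac:(lia) Hp2) as C3.
  unfold Cases in *. destruct r; dcases C1; dcases C2; dcases C3; lia.
Qed.


Definition NC (b c : config) : Prop :=
  forall pm p pp, pm = p - 1 -> pp = p + 1 ->
    X b pm + 2 <= X b p -> X b pp + 2 <= X b p -> X c p + 1 = X b p ->
    X b pm + 2 = X b p /\ X b pp + 2 = X b p.

Definition Rel (b c : config) (D : Z -> Z) : Prop :=
  (forall j, 0 <= D j <= 1) /\ (forall j, X b j - X c j = D (j-1) - D j).

Lemma rel_w b c D j jm : Rel b c D -> jm = j - 1 -> X b j - X c j = D jm - D j.
Proof. intros [_ H] ->. apply H. Qed.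

Lemma part1 r b c D i : Rel b c D -> NC b c -> NC c b ->
  0 <= D i + (rr r b i - ll r b (i+1)) - (rr r c i - ll r c (i+1)) <= 1.
Proof.
  intros HR Nb Nc.
  set (i_ := i - 2). set (i0 := i - 1). set (i2 := i+1). set (i3 := i+2).
  pose proof (cases r b i0 i i2 eq_refl eq_refl) as Fb1.
  pose proof (cases r b i i2 i3 ltac:(unfold i2; lia) ltac:(unfold i2,i3; lia)) as Fb2.
  pose proof (cases r c i0 i i2 eq_refl eq_refl) as Fc1.
  pose proof (cases r c i i2 i3 ltac:(unfold i2; lia) ltac:(unfold i2,i3; lia)) as Fc2.
  pose proof (rel_w b c D i0 i_ HR ltac:(unfold i0,i_;lia)) as R0.
  pose proof (rel_w b c D i i0 HR eq_refl) as R1.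
  pose proof (rel_w b c D i2 i HR ltac:(unfold i2;lia)) as R2.
  pose proof (rel_w b c D i3 i2 HR ltac:(unfold i2,i3;lia)) as R3.
  destruct HR as [HD _].
  pose proof (HD i_). pose proof (HD i0). pose proof (HD i). pose proof (HD i2). pose proof (HD i3).
  pose proof (Nb i0 i i2 eq_refl eq_refl) as N1.
  pose proof (Nb i i2 i3 ltac:(unfold i2; lia) ltac:(unfold i2,i3; lia)) as N2.
  pose proof (Nc i0 i i2 eq_refl eq_refl) as N3.
  pose proof (Nc i i2 i3 ltac:(unfold i2; lia) ltac:(unfold i2,i3; lia)) as N4.
  clearbody i_ i0 i2 i3. clear Nb Nc HD.
  unfold Cases in *.
  destruct r;
  destruct Fb1 as [[? [? [? ?]]]|[[? [? [? ?]]]|[? [? [? ?]]]]];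
  destruct Fb2 as [[? [? [? ?]]]|[[? [? [? ?]]]|[? [? [? ?]]]]];
  destruct Fc1 as [[? [? [? ?]]]|[[? [? [? ?]]]|[? [? [? ?]]]]];
  destruct Fc2 as [[? [? [? ?]]]|[[? [? [? ?]]]|[? [? [? ?]]]]];
  first [ (clear N1 N2 N3 N4; lia) | lia ].
Qed.

Definition Dn r b c D i := D i + (rr r b i - ll r b (i+1)) - (rr r c i - ll r c (i+1)).

Lemma rel_step r b c D : Rel b c D -> NC b c -> NC c b -> Rel (step_of r b) (step_of r c) (Dn r b c D).
Proof.
  intros HR Nb Nc. split.
  - intro j. apply part1; auto.
  - intro j. unfold Dn.
    replace (j - 1 + 1) with j by ring.
    rewrite (fire_Z r b (j-1) j (j+1) eq_refl eq_refl).
    rewrite (fire_Z r c (j-1) j (j+1) eq_refl eq_refl).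
    pose proof (rel_w b c D j (j-1) HR eq_refl). lia.
Qed.

Lemma part2b r b c D pm p pp : pm = p - 1 -> pp = p + 1 -> Rel b c D -> NC b c -> NC c b ->
  NC (step_of r b) (step_of r c).
Proof.
  intros _ _ HR Nb Nc qm q qp Hqm Hqp H1 H2 H3.
  destruct (Z.le_gt_cases (X b qm + 2) (X b q)) as [Cm|Cm];
  [destruct (Z.le_gt_cases (X b qp + 2) (X b q)) as [Cp|Cp]|].
  2,3: apply (SC1 r b (qm-1) qm q qp (qp+1)); auto; lia.
  exfalso.
  pose proof (rel_step r b c D HR Nb Nc) as HR'.
  pose proof (rel_w _ _ _ q qm HR' Hqm) as E'.
  destruct HR' as [HD' _]. pose proof (HD' qm) as Dm'. pose proof (HD' q) as Dq'.
  unfold Dn in Dm', Dq', E'.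
  replace (qm + 1) with q in * by lia.
  rewrite <- Hqp in *.
  pose proof (rel_w b c D q qm HR Hqm) as Eq.
  destruct HR as [HD _]. pose proof (HD qm). pose proof (HD q).
  pose proof (cases r b (qm-1) qm q eq_refl ltac:(lia)) as C1.
  pose proof (cases r b qm q qp Hqm Hqp) as C2.
  pose proof (cases r b q qp (qp+1) ltac:(lia) eq_refl) as C3.
  pose proof (bnd r c qm) as B1. pose proof (bnd r c q) as B2. pose proof (bnd r c qp) as B3.
  pose proof (bnd r b (qm-1)) as B4. pose proof (bnd r b (qp+1)) as B5.
  pose proof (Nb qm q qp Hqm Hqp) as N.
  rewrite (fire_Z r b (qm-1) qm q eq_refl ltac:(lia)) in *.
  rewrite (fire_Z r b qm q qp Hqm Hqp) in *.
  rewrite (fire_Z r b q qp (qp+1) ltac:(lia) eq_refl) in *.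
  rewrite (fire_Z r c qm q qp Hqm Hqp) in *.
  clear Nb Nc HD HD'.
  unfold Cases in *. destruct r; dcases C1; dcases C2; dcases C3; lia.
Qed.

Lemma part2c r b c D : Rel b c D -> NC b c -> NC c b ->
  NC (step_of r c) (step_of r b).
Proof.
  intros HR Nb Nc qm q qp Hqm Hqp H1 H2 H3.
  destruct (Z.le_gt_cases (X c qm + 2) (X c q)) as [Cm|Cm];
  [destruct (Z.le_gt_cases (X c qp + 2) (X c q)) as [Cp|Cp]|].
  2,3: apply (SC1 r c (qm-1) qm q qp (qp+1)); auto; lia.
  exfalso.
  pose proof (rel_step r b c D HR Nb Nc) as HR'.
  pose proof (rel_w _ _ _ q qm HR' Hqm) as E'.
  destruct HR' as [HD' _]. pose proof (HD' qm) as Dm'. pose proof (HD' q) as Dq'.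
  unfold Dn in Dm', Dq', E'.
  replace (qm + 1) with q in * by lia.
  rewrite <- Hqp in *.
  pose proof (rel_w b c D q qm HR Hqm) as Eq.
  destruct HR as [HD _]. pose proof (HD qm). pose proof (HD q).
  pose proof (cases r c (qm-1) qm q eq_refl ltac:(lia)) as C1.
  pose proof (cases r c qm q qp Hqm Hqp) as C2.
  pose proof (cases r c q qp (qp+1) ltac:(lia) eq_refl) as C3.
  pose proof (bnd r b qm) as B1. pose proof (bnd r b q) as B2. pose proof (bnd r b qp) as B3.
  pose proof (bnd r c (qm-1)) as B4. pose proof (bnd r c (qp+1)) as B5.
  pose proof (Nc qm q qp Hqm Hqp) as N.
  rewrite (fire_Z r c (qm-1) qm q eq_refl ltac:(lia)) in *.
  rewrite (fire_Z r c qm q qp Hqm Hqp) in *.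
  rewrite (fire_Z r c q qp (qp+1) ltac:(lia) eq_refl) in *.
  rewrite (fire_Z r b qm q qp Hqm Hqp) in *.
  clear Nb Nc HD HD'.
  unfold Cases in *. destruct r; dcases C1; dcases C2; dcases C3; lia.
Qed.

Definition D0 a i := (rr RR a i - ll RR a (i+1)) - (rr RL a i - ll RL a (i+1)).

Lemma init_rel a : Rel (step_of RR a) (step_of RL a) (D0 a).
Proof.
  split.
  - intro i. unfold D0.
    pose proof (cases RR a (i-1) i (i+1) eq_refl eq_refl) as C1.
    pose proof (cases RR a i (i+1) (i+1+1) ltac:(lia) eq_refl) as C2.
    pose proof (cases RL a (i-1) i (i+1) eq_refl eq_refl) as C3.
    pose proof (cases RL a i (i+1) (i+1+1) ltac:(lia) eq_refl) as C4.
    unfold Cases in *. dcases C1; dcases C2; dcases C3; dcases C4; lia.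
  - intro j. unfold D0. replace (j - 1 + 1) with j by ring.
    rewrite (fire_Z RR a (j-1) j (j+1) eq_refl eq_refl).
    rewrite (fire_Z RL a (j-1) j (j+1) eq_refl eq_refl). lia.
Qed.

Lemma init_NC1 a : NC (step_of RR a) (step_of RL a).
Proof.
  intros qm q qp Hqm Hqp H1 H2 H3.
  rewrite (fire_Z RR a (qm-1) qm q eq_refl ltac:(lia)) in *.
  rewrite (fire_Z RR a qm q qp Hqm Hqp) in *.
  rewrite (fire_Z RR a q qp (qp+1) ltac:(lia) eq_refl) in *.
  rewrite (fire_Z RL a qm q qp Hqm Hqp) in *.
  pose proof (bnd RR a (qm-1)). pose proof (bnd RR a (qp+1)).
  pose proof (cases RR a (qm-1) qm q eq_refl ltac:(lia)) as C1.
  pose proof (cases RR a qm q qp Hqm Hqp) as C2.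
  pose proof (cases RR a q qp (qp+1) ltac:(lia) eq_refl) as C3.
  pose proof (cases RL a (qm-1) qm q eq_refl ltac:(lia)) as C4.
  pose proof (cases RL a qm q qp Hqm Hqp) as C5.
  pose proof (cases RL a q qp (qp+1) ltac:(lia) eq_refl) as C6.
  unfold Cases in *. dcases C1; dcases C2; dcases C3; dcases C4; dcases C5; dcases C6; lia.
Qed.

Lemma init_NC2 a : NC (step_of RL a) (step_of RR a).
Proof.
  intros qm q qp Hqm Hqp H1 H2 H3.
  rewrite (fire_Z RL a (qm-1) qm q eq_refl ltac:(lia)) in *.
  rewrite (fire_Z RL a qm q qp Hqm Hqp) in *.
  rewrite (fire_Z RL a q qp (qp+1) ltac:(lia) eq_refl) in *.
  rewrite (fire_Z RR a qm q qp Hqm Hqp) in *.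
  pose proof (bnd RL a (qm-1)). pose proof (bnd RL a (qp+1)).
  pose proof (cases RR a (qm-1) qm q eq_refl ltac:(lia)) as C1.
  pose proof (cases RR a qm q qp Hqm Hqp) as C2.
  pose proof (cases RR a q qp (qp+1) ltac:(lia) eq_refl) as C3.
  pose proof (cases RL a (qm-1) qm q eq_refl ltac:(lia)) as C4.
  pose proof (cases RL a qm q qp Hqm Hqp) as C5.
  pose proof (cases RL a q qp (qp+1) ltac:(lia) eq_refl) as C6.
  unfold Cases in *. dcases C1; dcases C2; dcases C3; dcases C4; dcases C5; dcases C6; lia.
Qed.


Definition FS (x : config) : Prop := exists N, 0 <= N /\ forall i, N < Z.abs i -> X x i = 0.
Definition FSD (D : Z -> Z) : Prop := exists N, 0 <= N /\ forall i, N < Z.abs i -> D i = 0.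

Lemma rr_zero r x i : X x i = 0 -> rr r x i = 0 /\ ll r x i = 0.
Proof.
  intro H. pose proof (cases r x (i-1) i (i+1) eq_refl eq_refl) as C.
  unfold X in *. unfold Cases in C. unfold X in C.
  destruct r; dcases C; lia.
Qed.

Lemma FS_step r x : FS x -> FS (step_of r x).
Proof.
  intros [N [HN H]]. exists (N+1). split; [lia|]. intros i Hi.
  rewrite (fire_Z r x (i-1) i (i+1) eq_refl eq_refl).
  pose proof (H i ltac:(lia)). pose proof (H (i-1) ltac:(lia)). pose proof (H (i+1) ltac:(lia)).
  pose proof (rr_zero r x i ltac:(assumption)).
  pose proof (rr_zero r x (i-1) ltac:(assumption)).
  pose proof (rr_zero r x (i+1) ltac:(assumption)). lia.
Qed.

Lemma FSD_Dn r b c D : FS b -> FS c -> FSD D -> FSD (Dn r b c D).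
Proof.
  intros [Nb [Hb1 Hb]] [Nc [Hc1 Hc]] [Nd [Hd1 Hd]].
  exists (Nb + Nc + Nd + 1). split; [lia|]. intros i Hi. unfold Dn.
  rewrite (Hd i ltac:(lia)).
  pose proof (rr_zero r b i (Hb i ltac:(lia))).
  pose proof (rr_zero r b (i+1) (Hb (i+1) ltac:(lia))).
  pose proof (rr_zero r c i (Hc i ltac:(lia))).
  pose proof (rr_zero r c (i+1) (Hc (i+1) ltac:(lia))). lia.
Qed.

Lemma FSD_D0 a : FS a -> FSD (D0 a).
Proof.
  intros [N [H1 H]]. exists (N+1). split; [lia|]. intros i Hi. unfold D0.
  pose proof (rr_zero RR a i (H i ltac:(lia))).
  pose proof (rr_zero RR a (i+1) (H (i+1) ltac:(lia))).
  pose proof (rr_zero RL a i (H i ltac:(lia))).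
  pose proof (rr_zero RL a (i+1) (H (i+1) ltac:(lia))). lia.
Qed.

Definition Inv (b c : config) : Prop :=
  FS b /\ FS c /\ NC b c /\ NC c b /\ exists D, Rel b c D /\ FSD D.

Lemma Inv_step r b c : Inv b c -> Inv (step_of r b) (step_of r c).
Proof.
  intros [Fb [Fc [Nb [Nc [D [HR HF]]]]]].
  split; [apply FS_step; auto|].
  split; [apply FS_step; auto|].
  split; [apply (part2b r b c D (0-1) 0 (0+1)); auto|].
  split; [apply (part2c r b c D); auto|].
  exists (Dn r b c D). split; [apply rel_step; auto| apply FSD_Dn; auto].
Qed.

Lemma Inv_act w : forall b c, Inv b c -> Inv (act w b) (act w c).
Proof.
  induction w as [|r w IH]; intros b c H; simpl; auto.
  apply IH. apply Inv_step. exact H.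
Qed.

Lemma Inv_init a : FS a -> Inv (stepR a) (stepL a).
Proof.
  intro H. change (stepR a) with (step_of RR a). change (stepL a) with (step_of RL a).
  split; [apply FS_step; auto|].
  split; [apply FS_step; auto|].
  split; [apply init_NC1|]. split; [apply init_NC2|].
  exists (D0 a). split; [apply init_rel| apply FSD_D0; auto].
Qed.

Lemma reach_FS n a : reachable n a -> FS a.
Proof.
  induction 1 as [c Hc | c d _ IH [ch [Hv Hd]]].
  - exists 0. split; [lia|]. intros i Hi. unfold X. rewrite Hc. unfold init.
    destruct (Z.eqb_spec i 0); [lia|reflexivity].
  - destruct IH as [N [HN H]]. exists (N+1). split; [lia|]. intros i Hi.
    unfold X. rewrite Hd. unfold fire.
    assert (H0 : c i = 0%nat) by (pose proof (H i ltac:(lia)); unfold X in *; lia).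
    assert (Hm : c (i-1) = 0%nat) by (pose proof (H (i-1) ltac:(lia)); unfold X in *; lia).
    assert (Hp : c (i+1) = 0%nat) by (pose proof (H (i+1) ltac:(lia)); unfold X in *; lia).
    pose proof (Hv (i+1)) as V1. pose proof (Hv (i-1)) as V2.
    destruct (ch (i+1)) as [[|]|] eqn:E1;
    [unfold appL in V1; rewrite Hp in V1; simpl in V1; apply Nat.leb_le in V1; lia| |];
    (destruct (ch (i-1)) as [[|]|] eqn:E2;
    [ | unfold appR in V2; rewrite Hm in V2; simpl in V2; apply Nat.leb_le in V2; lia| ]);
    simpl; rewrite H0; simpl; lia.
Qed.


Definition nz (x : Z) : bool := negb (Z.eqb x 0).

Lemma altE (E : nat -> Z) (HE : forall k, E k = 0 \/ E k = 1) :
  forall len m,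
   (E m = 0 -> E (m + len)%nat = 0 ->
      alt (filter nz (map (fun k => E k - E (S k)) (seq m len))) = true) /\
   (E m = 1 -> E (m + len)%nat = 0 ->
      alt ((-1) :: filter nz (map (fun k => E k - E (S k)) (seq m len))) = true).
Proof.
  induction len as [|len IH]; intros m.
  - rewrite Nat.add_0_r. simpl. split; intros; [reflexivity|lia].
  - simpl. replace (m + S len)%nat with (S m + len)%nat by lia.
    destruct (IH (S m)) as [IH1 IH2].
    unfold nz at 1.
    destruct (HE m) as [Hm|Hm]; destruct (HE (S m)) as [Hs|Hs]; rewrite Hm, Hs; simpl;
    split; intros; try lia; auto.
Qed.

Lemma tri_of_rel b c D : Rel b c D -> FSD D -> tri_star b c.
Proof.
  intros [HD HR] [N [HN HF]].
  exists (Z.to_nat (N+1)).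
  assert (Ed : forall i, delta b c i = D (i-1) - D i) by (intro i; apply HR).
  split; [|split].
  - intros i Hi. rewrite Ed. rewrite (HF i ltac:(lia)), (HF (i-1) ltac:(lia)). lia.
  - intro i. rewrite Ed. pose proof (HD i). pose proof (HD (i-1)). lia.
  - set (M := Z.to_nat (N+1)).
    set (E := fun k : nat => D (Z.of_nat k - Z.of_nat M - 1)).
    assert (HE : forall k, E k = 0 \/ E k = 1) by (intro k; unfold E; pose proof (HD (Z.of_nat k - Z.of_nat M - 1)); lia).
    unfold window. rewrite map_map.
    rewrite (map_ext _ (fun k => E k - E (S k))).
    2:{ intro k. rewrite Ed. unfold E. f_equal. f_equal. rewrite Nat2Z.inj_succ. lia. }
    apply (altE E HE (2 * M + 1) 0); unfold E.
    + apply HF. unfold M. lia.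
    + apply HF. unfold M. lia.
Qed.


Theorem proposition2 (n : nat) (a : config) (Ha : reachable n a)
  (w : list rule) :
  tri_star (act w (stepR a)) (act w (stepL a)).
Proof.
  pose proof (Inv_act w _ _ (Inv_init a (reach_FS n a Ha))) as [_ [_ [_ [_ [D [HR HF]]]]]].
  exact (tri_of_rel _ _ D HR HF).
Qed.
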